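(* Let $T \in \mathbb{R}^{n_1} \otimes \mathbb{R}^{n_2} \otimes \mathbb{R}^{n_3}$ be a real tensor. Then \[ Q(T) \geq \left\lfloor \sqrt{Q_{\mathbb{C}}(T)} \right\rfloor. \]
   Context: For $r \geq 0$ let $I_r := \sum_{j=1}^r e_j \otimes e_j \otimes e_j \in \mathbb{R}^r\otimes\mathbb{R}^r\otimes\mathbb{R}^r$ (the $r$-th unit tensor; $e_j$ the standard basis vectors). The (real) subrank of $T \in \mathbb{R}^{n_1} \otimes \mathbb{R}^{n_2} \otimes \mathbb{R}^{n_3}$ is $Q(T) := \max\{ r \mid \exists\ \mathbb{R}\text{-linear maps } \varphi_i : \mathbb{R}^{n_i} \to \mathbb{R}^r \text{ with } (\varphi_1 \otimes \varphi_2 \otimes \varphi_3) T = I_r\}$. The complex subrank $Q_{\mathbb{C}}(T)$ of the real tensor $T$ is defined in the same way but allowing $\mathbb{C}$-linear maps $\varphi_i : \mathbb{C}^{n_i} \to \mathbb{C}^r$ (with $T$ viewed in $\mathbb{C}^{n_1}\otimes\mathbb{C}^{n_2}\otimes\mathbb{C}^{n_3}$ and $I_r$ the complex unit tensor). *)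

(* Defs.v *)
From HB Require Import structures.
From mathcomp Require Import all_boot all_order all_algebra.
From mathcomp Require Import boolp reals.
From mathcomp Require Import complex.
Set Implicit Arguments. Unset Strict Implicit. Unset Printing Implicit Defensive.
Import Order.TTheory GRing.Theory Num.Theory.
Local Open Scope ring_scope.

Definition tensor (K : Type) (n1 n2 n3 : nat) := 'I_n1 -> 'I_n2 -> 'I_n3 -> K.

Definition unit_tensor (K : pzRingType) (r : nat) : tensor K r r r :=
  fun a b c => ((a == b) && (b == c))%:R.

(* (phi1 (x) phi2 (x) phi3) T, where phi_i : K^{n_i} -> K^r is given by
   its matrix (phi_i e_j = column j). *)
Definition tensor_map (K : pzRingType) (n1 n2 n3 m1 m2 m3 : nat)
  (A : 'M[K]_(m1, n1)) (B : 'M[K]_(m2, n2)) (C : 'M[K]_(m3, n3))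
  (T : tensor K n1 n2 n3) : tensor K m1 m2 m3 :=
  fun a b c => \sum_(i < n1) \sum_(j < n2) \sum_(k < n3)
                 A a i * B b j * C c k * T i j k.

Definition restricts_to_unit (K : pzRingType) (n1 n2 n3 : nat)
  (T : tensor K n1 n2 n3) (r : nat) : Prop :=
  exists (A : 'M[K]_(r, n1)) (B : 'M[K]_(r, n2)) (C : 'M[K]_(r, n3)),
    tensor_map A B C T = @unit_tensor K r.

(* Subrank over K: the largest r such that T restricts to I_r.
   Such r always satisfies r <= n1 (flattening rank), so the max may be
   taken over r <= n1; r = 0 always qualifies. *)
Definition subrank (K : pzRingType) (n1 n2 n3 : nat) (T : tensor K n1 n2 n3)
  : nat :=
  (\max_(r < n1.+1 | `[< restricts_to_unit T r >]) r)%N.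

Definition complexify (R : rcfType) (n1 n2 n3 : nat) (T : tensor R n1 n2 n3)
  : tensor R[i] n1 n2 n3 :=
  fun i j k => ((T i j k)%:C)%C.

Definition Q (R : realType) (n1 n2 n3 : nat) (T : tensor R n1 n2 n3) : nat :=
  subrank T.
Definition Q_C (R : realType) (n1 n2 n3 : nat) (T : tensor R n1 n2 n3) : nat :=
  subrank (complexify T).

(* Main.v *)
Require Import Defs.
From HB Require Import structures.
From mathcomp Require Import all_boot all_order all_algebra.
From mathcomp Require Import boolp reals.
From mathcomp Require Import complex.
From Stdlib Require Import PeanoNat.
Set Implicit Arguments. Unset Strict Implicit. Unset Printing Implicit Defensive.
Import Order.TTheory GRing.Theory Num.Theory.
Local Open Scope ring_scope.

Lemma mxvec_index_eq m n (i i' : 'I_m) (j j' : 'I_n) :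
  (mxvec_index i j == mxvec_index i' j') = ((i == i') && (j == j')).
Proof.
by rewrite /mxvec_index (inj_eq (@cast_ord_inj _ _ _)) (inj_eq (@enum_rank_inj _)) xpair_eqE.
Qed.

Lemma widen_eq n m (h : (n <= m)%N) (k k' : 'I_n) :
  (widen_ord h k == widen_ord h k') = (k == k').
Proof. by rewrite -val_eqE /= val_eqE. Qed.

Lemma sum4 (S : comNzRingType) (I J : finType) (a t : S) (fb : I -> S) (fc : J -> S) :
  a * ((\sum_c fb c) * (\sum_b fc b) * t) = \sum_c \sum_b a * fb c * fc b * t.
Proof.
rewrite mulr_suml mulr_suml mulr_sumr; apply: eq_bigr => c _.
rewrite mulr_sumr mulr_suml mulr_sumr; apply: eq_bigr => b _.
by rewrite !mulrA.
Qed.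

Section Gen.
Variables (n1 n2 n3 r s : nat) (hsr : (s * s <= r)%N).
Local Notation w := (widen_ord hsr).

Definition Ymat (S : comNzRingType) (B : 'M[S]_(r,n2)) : 'M[S]_(s,n2) :=
  \matrix_(b, j) \sum_(c < s) B (w (mxvec_index b c)) j.
Definition Zmat (S : comNzRingType) (C : 'M[S]_(r,n3)) : 'M[S]_(s,n3) :=
  \matrix_(c, l) \sum_(b < s) C (w (mxvec_index b c)) l.
Definition Kmat (S : comNzRingType) (A : 'M[S]_(r,n1)) : 'M[S]_(s*s,n1) :=
  \matrix_(k, i) A (w k) i.
Definition Mmat (S : comNzRingType) (T : tensor S n1 n2 n3) (Y : 'M[S]_(s,n2))
  (Z : 'M[S]_(s,n3)) : 'M[S]_(n1, s*s) :=
  \matrix_(i, k) mxvec (\matrix_(b, c) \sum_j \sum_l Y b j * Z c l * T i j l) 0 k.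
Definition Dfun (S : comNzRingType) (A : 'M[S]_(r,n1)) B C (T : tensor S n1 n2 n3) :=
  \det (Kmat A *m Mmat T (Ymat B) (Zmat C)).

Lemma Dfun_morph (S S' : comNzRingType) (f : {rmorphism S -> S'}) A B C T :
  f (Dfun A B C T) = Dfun (map_mx f A) (map_mx f B) (map_mx f C)
                          (fun i j l => f (T i j l)).
Proof.
rewrite /Dfun -det_map_mx map_mxM; congr (\det (_ *m _)).
  by apply/matrixP => k i; rewrite !mxE.
apply/matrixP => i k; case/mxvec_indexP: k => b c.
rewrite !mxE !mxvecE !mxE rmorph_sum; apply: eq_bigr => j _.
rewrite rmorph_sum; apply: eq_bigr => l _.
rewrite !rmorphM !mxE !rmorph_sum; congr (_ * _ * _).
  by apply: eq_bigr => ? _; rewrite mxE.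
by apply: eq_bigr => ? _; rewrite mxE.
Qed.


Lemma Dfun_unit (S : comNzRingType) (A : 'M[S]_(r,n1)) (B : 'M[S]_(r,n2)) (C : 'M[S]_(r,n3)) (T : tensor S n1 n2 n3) :
  tensor_map A B C T = @unit_tensor S r -> Dfun A B C T = 1.
Proof.
move=> hT; rewrite /Dfun.
suff -> : Kmat A *m Mmat T (Ymat B) (Zmat C) = 1%:M by rewrite det1.
apply/matrixP => k k'; case/mxvec_indexP: k' => b c.
rewrite !mxE.
transitivity (\sum_(c0 < s) \sum_(b0 < s)
   tensor_map A B C T (w k) (w (mxvec_index b c0)) (w (mxvec_index b0 c))).
  rewrite /tensor_map.
  under eq_bigr => i _.
    rewrite !mxE mxvecE !mxE mulr_sumr.
    under eq_bigr => j _.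
      rewrite mulr_sumr.
      under eq_bigr => l _.
        rewrite !mxE sum4.
      over.
      rewrite exchange_big /=.
      under eq_bigr => c0 _ do rewrite exchange_big /=.
    over.
    rewrite exchange_big /=.
    under eq_bigr => c0 _ do rewrite exchange_big /=.
  over.
  rewrite exchange_big /=.
  apply: eq_bigr => c0 _.
  rewrite exchange_big /=.
  apply: eq_bigr => b0 _.
  by [].
rewrite hT /unit_tensor.
under eq_bigr => c0 _.
  under eq_bigr => b0 _ do rewrite !widen_eq !mxvec_index_eq.
  rewrite (bigD1 b) //= big1 => [|b0 /negbTE hb]; last first.
    by rewrite [b == b0]eq_sym hb /= andbF.
  rewrite eqxx /= addr0.
over.
rewrite (bigD1 c) //= big1 => [|c0 /negbTE hc]; last by rewrite hc andbF.
by rewrite eqxx andbT addr0.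
Qed.


Lemma restr_of_Dfun (S : fieldType) (A : 'M[S]_(r,n1)) (B : 'M[S]_(r,n2))
  (C : 'M[S]_(r,n3)) (T : tensor S n1 n2 n3) :
  Dfun A B C T != 0 -> restricts_to_unit T s.
Proof.
move=> hD.
set N := Kmat A *m Mmat T (Ymat B) (Zmat C).
have uN : N \in unitmx by rewrite unitmxE unitfE.
set W := invmx N *m Kmat A.
have WM : W *m Mmat T (Ymat B) (Zmat C) = 1%:M by rewrite -mulmxA mulVmx.
exists (\matrix_(a, i) W (mxvec_index a a) i), (Ymat B), (Zmat C).
apply: funext => a; apply: funext => b; apply: funext => c.
move/matrixP: (WM) => /(_ (mxvec_index a a) (mxvec_index b c)).
rewrite /= [in RHS]mxE mxvec_index_eq => H.
rewrite /tensor_map /unit_tensor.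
transitivity ((W *m Mmat T (Ymat B) (Zmat C)) (mxvec_index a a) (mxvec_index b c)).
  rewrite mxE; apply: eq_bigr => i _.
  rewrite !mxE mxvecE mxE mulr_sumr; apply: eq_bigr => j _.
  rewrite mulr_sumr; apply: eq_bigr => l _.
  by rewrite !mxE !mulrA.
by rewrite H; case: (a =P b) => //= ->.
Qed.

End Gen.

Local Open Scope complex_scope.
Lemma restr0 (K : pzRingType) n1 n2 n3 (T : tensor K n1 n2 n3) : restricts_to_unit T 0.
Proof.
exists 0, 0, 0; apply: funext => a; by move: (ltn_ord a); rewrite ltn0.
Qed.

Lemma subrank_attained (K : pzRingType) n1 n2 n3 (T : tensor K n1 n2 n3) :
  restricts_to_unit T (subrank T).
Proof.
rewrite /subrank.
have P0 : `[< restricts_to_unit T (@ord0 n1) >] by apply/asboolP; exact: restr0.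
rewrite (@bigop.bigmax_eq_arg _ ord0 (fun i : 'I_n1.+1 => `[< restricts_to_unit T i >]) (fun i => nat_of_ord i) P0).
by case: arg_maxnP => // i /asboolP.
Qed.

Lemma subrank_le (K : pzRingType) n1 n2 n3 (T : tensor K n1 n2 n3) :
  (subrank T <= n1)%N.
Proof. by apply/bigmax_leqP => i _; rewrite -ltnS. Qed.

Lemma exists_real_nonroot (R : rcfType) (p : {poly R[i]}) :
  p != 0 -> exists x : R, p.[x%:C] != 0.
Proof.
move=> pn0; case: (pselect (exists x : R, p.[x%:C] != 0)) => // H.
have H' : forall x : R, p.[x%:C] = 0.
  move=> x; apply/eqP; apply/negPn/negP => hx; apply: H; by exists x.
pose rs := [seq ((n%:R : R)%:C) | n <- iota 0 (size p)].
have hall : all (root p) rs.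
  apply/allP => x /mapP [n _ ->]; by rewrite rootE H'.
have huniq : uniq rs.
  rewrite map_inj_uniq ?iota_uniq // => m n /complexI /eqP.
  by rewrite eqr_nat => /eqP.
have := max_poly_roots pn0 hall huniq.
by rewrite size_map size_iota ltnn.
Qed.

Definition liftp (R : rcfType) m n (X : 'M[R[i]]_(m,n)) : 'M[{poly R[i]}]_(m,n) :=
  \matrix_(i,j) (((complex.Re (X i j))%:C)%:P + 'X * ((complex.Im (X i j))%:C)%:P : {poly R[i]}).
Definition liftv (R : rcfType) (t : R[i]) m n (X : 'M[R[i]]_(m,n)) : 'M[R[i]]_(m,n) :=
  \matrix_(i,j) ((complex.Re (X i j))%:C + t * (complex.Im (X i j))%:C).
Definition liftr (R : rcfType) (t : R) m n (X : 'M[R[i]]_(m,n)) : 'M[R]_(m,n) :=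
  \matrix_(i,j) (complex.Re (X i j) + t * complex.Im (X i j)).

Lemma eval_liftp (R : rcfType) (t : R[i]) m n (X : 'M[R[i]]_(m,n)) :
  map_mx (horner_eval t) (liftp X) = liftv t X.
Proof. by apply/matrixP => i j; rewrite !mxE /horner_eval !hornerE. Qed.

Lemma liftv_i (R : rcfType) m n (X : 'M[R[i]]_(m,n)) : liftv 'i X = X.
Proof. by apply/matrixP => i j; rewrite !mxE -complexE. Qed.

Lemma liftv_real (R : rcfType) (t : R) m n (X : 'M[R[i]]_(m,n)) :
  liftv t%:C X = map_mx (real_complex R) (liftr t X).
Proof. by apply/matrixP => i j; rewrite !mxE rmorphD rmorphM. Qed.

Theorem theorem2p2 (R : realType) (n1 n2 n3 : nat) (T : tensor R n1 n2 n3) :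
  (Nat.sqrt (Q_C T) <= Q T)%N.
Proof.
set r := Q_C T; set s := Nat.sqrt r.
have hsr : (s * s <= r)%N.
  by case: (Nat.sqrt_spec' r) => /ssrnat.leP.
have hr : restricts_to_unit (complexify T) r by exact: subrank_attained.
have rn1 : (r <= n1)%N by exact: subrank_le.
case: hr => A [B [C hABC]].
pose p := Dfun hsr (liftp A) (liftp B) (liftp C)
            (fun i j l => (complexify T i j l)%:P).
have ev : forall t, p.[t] = Dfun hsr (liftv t A) (liftv t B) (liftv t C) (complexify T).
  move=> t; rewrite -[p.[t]]/(horner_eval t p) /p Dfun_morph !eval_liftp.
  by congr Dfun; apply: funext => i; apply: funext => j; apply: funext => l;
     exact: hornerC.
have pn0 : p != 0.
  apply/eqP => p0; move: (ev 'i); rewrite p0 horner0 !liftv_i (Dfun_unit hsr hABC).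
  by move/eqP; rewrite eq_sym oner_eq0.
have [x hx] := exists_real_nonroot pn0.
rewrite ev !liftv_real in hx.
have hx' : Dfun hsr (liftr x A) (liftr x B) (liftr x C) T != 0.
  apply: contra hx => /eqP h0.
  have -> : complexify T = (fun i j l => real_complex R (T i j l)) by [].
  by rewrite -Dfun_morph h0 rmorph0.
have hs := restr_of_Dfun hx'.
have sq : forall k, (k <= k * k)%N by case=> // k; rewrite leq_pmulr.
have sn1 : (s < n1.+1)%N by rewrite ltnS (leq_trans _ rn1) // (leq_trans _ hsr) // sq.
rewrite /Q /subrank.
apply: (leq_bigmax_cond (Ordinal sn1)) => /=.
by apply/asboolP.
Qed.
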